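(* Let $G=(V,E,m,w)$ be a weighted graph admitting an intrinsic metric $\rho$ with finite balls and finite jump size $s=\sup_{x\sim y}\rho(x,y)$. Suppose $G$ has polynomial volume growth: there are $x_0\in V$ and constants $\alpha, C$ with $m(B_R(x_0))\le C(1+R)^{\alpha}$ for all $R>0$. Let $k>0$ and $u\in\widetilde{\mathcal{P}}_k(G)$. Then for any $q\in\mathbb{N}$ with $4q>2k+\alpha+2$, $D_t^q u\equiv 0$. In particular, there exist functions $p_i$ on $V$, $0\le i\le q-1$, such that $u(x,t)=\sum_{i=0}^{q-1}p_i(x)\binom{-t}{i}$ for all $x\in V$, $t\in\mathbb{Z}_-$.
   Context: A weighted graph $G=(V,E,m,w)$ consists of a locally finite, simple, undirected, connected graph $(V,E)$, a symmetric edge weight $w:E\to(0,\infty)$, and a vertex weight $m:V\to(0,\infty)$; $m(\Omega)=\sum_{x\in\Omega}m_x$. The Laplacian is $\Delta f(x)=\sum_{y\sim x}\frac{w_{xy}}{m_x}(f(y)-f(x))$. A (pseudo)metric $\rho$ on $V$ is intrinsic if $\sum_{y\sim x}w_{xy}\rho^2(x,y)\le m_x$ for all $x$; $B_R(x)=\{y:\rho(y,x)\le R\}$. $\mathbb{Z}_-=\mathbb{Z}\cap(-\infty,0]$; $D_t u(x,t)=u(x,t)-u(x,t-1)$ and $D_t^q$ is its $q$-fold composition. An ancient solution of the discrete-time heat equation is $u:V\times\mathbb{Z}_-\to\mathbb{R}$ with $D_tu=\Delta u$. $\widetilde{\mathcal{P}}_k(G)$ is the space of such solutions for which there are $x_0\in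 V$ and $C_u$ with $\sup_{B_R(x_0)\times([-R^2,0]\cap\mathbb{Z})}|u|\le C_u(1+R)^k$ for all $R>0$. For $n\in\mathbb{Z}_{\ge0}$, $\binom{n}{i}=\frac{n(n-1)\cdots(n-i+1)}{i!}$ if $0\le i\le n$ and $0$ otherwise. *)

(* Defs.v *)
From HB Require Import structures.
From mathcomp Require Import all_boot all_order all_algebra.
From mathcomp Require Import reals exp.
Set Implicit Arguments. Unset Strict Implicit. Unset Printing Implicit Defensive.
Import Order.TTheory GRing.Theory Num.Theory.
Local Open Scope ring_scope.

(* A locally finite graph on the vertex type V is given by the neighbour
   lists nb : V -> seq V ; y ~ x  iff  y \in nb x. *)

Inductive reach (V : eqType) (nb : V -> seq V) : V -> V -> Prop :=
| reach_refl x : reach nb x x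
| reach_step x y z : y \in nb x -> reach nb y z -> reach nb x z.

Definition weighted_graph (R : realType) (V : eqType) (nb : V -> seq V)
    (w : V -> V -> R) (m : V -> R) : Prop :=
  [/\ (forall x, uniq (nb x)),
      (forall x, x \notin nb x),
      (forall x y, (y \in nb x) = (x \in nb y)),
      (forall x y, y \in nb x -> w x y = w y x /\ 0 < w x y) &
      ((forall x, 0 < m x) /\ (forall x y, reach nb x y))].

Definition laplacian (R : realType) (V : eqType) (nb : V -> seq V)
    (w : V -> V -> R) (m : V -> R) (f : V -> R) (x : V) : R :=
  \sum_(y <- nb x) (w x y / m x) * (f y - f x).

Definition pseudometric (R : realType) (V : Type) (rho : V -> V -> R) : Prop :=
  [/\ (forall x, rho x x = 0),
      (forall x y, 0 <= rho x y),
      (forall x y, rho x y = rho y x) &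
      (forall x y z, rho x z <= rho x y + rho y z)].

Definition intrinsic (R : realType) (V : eqType) (nb : V -> seq V)
    (w : V -> V -> R) (m : V -> R) (rho : V -> V -> R) : Prop :=
  pseudometric rho /\
  forall x, \sum_(y <- nb x) w x y * rho x y ^+ 2 <= m x.

Definition finite_balls (R : realType) (V : eqType) (rho : V -> V -> R) : Prop :=
  forall (x : V) (r : R), exists s : seq V,
    forall y, (y \in s) <-> rho y x <= r.

Definition finite_jump (R : realType) (V : eqType) (nb : V -> seq V)
    (rho : V -> V -> R) : Prop :=
  exists s : R, forall x y, y \in nb x -> rho x y <= s.

(* m(B_r(x0)) <= C (1+r)^alpha for all r > 0; m of a (finite) ball is the sum
   of m over its vertices, i.e. the sup of the sums over its finite
   duplicate-free subfamilies. *)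
Definition poly_volume_growth (R : realType) (V : eqType) (m : V -> R)
    (rho : V -> V -> R) (x0 : V) (alpha C : R) : Prop :=
  forall r : R, 0 < r ->
    forall s : seq V, uniq s -> (forall y, y \in s -> rho y x0 <= r) ->
      \sum_(y <- s) m y <= C * powR (1 + r) alpha.

Definition Dt (R : realType) (V : Type) (u : V -> int -> R) : V -> int -> R :=
  fun x t => u x t - u x (t - 1)%R.

Definition Dtq (R : realType) (V : Type) (q : nat) (u : V -> int -> R) :
  V -> int -> R := iter q (@Dt R V) u.

(* ancient solution: D_t u = Delta u on V x Z_- (values at t > 0 are
   irrelevant and unconstrained) *)
Definition ancient_solution (R : realType) (V : eqType) (nb : V -> seq V)
    (w : V -> V -> R) (m : V -> R) (u : V -> int -> R) : Prop :=
  forall x (t : int), t <= 0 ->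
    Dt u x t = laplacian nb w m (fun y => u y t) x.

Definition Ptilde (R : realType) (V : eqType) (nb : V -> seq V)
    (w : V -> V -> R) (m : V -> R) (rho : V -> V -> R) (k : R)
    (u : V -> int -> R) : Prop :=
  ancient_solution nb w m u /\
  exists (x0 : V) (Cu : R), forall r : R, 0 < r ->
    forall (y : V) (t : int), rho y x0 <= r -> - (r ^+ 2) <= t%:~R -> t <= 0 ->
      `|u y t| <= Cu * powR (1 + r) k.

(* Main.v *)
Require Import Defs.
From HB Require Import structures.
From mathcomp Require Import all_boot all_order all_algebra.
From mathcomp Require Import reals exp.
From mathcomp.algebra_tactics Require Import ring lra.
From mathcomp Require Import zify.
From Stdlib Require Import Lia.
From Stdlib Require Import ClassicalEpsilon.
Import Order.TTheory GRing.Theory Num.Theory.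
Local Open Scope ring_scope.

Set Implicit Arguments. Unset Strict Implicit.

Section Sums.
Variable R : realFieldType.
Variable V : eqType.

Lemma sum_sub_uniq (s1 s2 : seq V) (G : V -> R) :
  uniq s1 -> uniq s2 -> {subset s1 <= s2} -> (forall y, y \in s2 -> 0 <= G y) ->
  \sum_(y <- s1) G y <= \sum_(y <- s2) G y.
Proof.
move=> u1 u2 sub G0.
rewrite [X in _ <= X](bigID (fun y => y \in s1)) /=.
have -> : \sum_(i <- s2 | i \in s1) G i = \sum_(y <- s1) G y.
  rewrite -big_filter; apply: perm_big; apply: uniq_perm.
  - exact: filter_uniq.
  - exact: u1.
  - move=> y; rewrite mem_filter; apply/andP/idP => [[]//|h]; split=>//; exact: sub.
rewrite lerDl big_seq_cond; apply: sumr_ge0 => i /andP[/G0 ? _] //.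
Qed.

Lemma sum_filter_eq (S l : seq V) (G : V -> R) :
  uniq S -> uniq l -> {subset l <= S} ->
  \sum_(y <- S) (if y \in l then G y else 0) = \sum_(y <- l) G y.
Proof.
move=> uS ul sub; rewrite -big_mkcond -big_filter; apply: perm_big.
apply: uniq_perm; first exact: filter_uniq.
  exact: ul.
move=> y; rewrite mem_filter; apply/andP/idP => [[]//|h]; split=>//; exact: sub.
Qed.

Lemma sum_filter_le (S l : seq V) (G : V -> R) :
  uniq S -> uniq l -> (forall y, y \in l -> 0 <= G y) ->
  \sum_(y <- S) (if y \in l then G y else 0) <= \sum_(y <- l) G y.
Proof.
move=> uS ul G0; rewrite -big_mkcond -big_filter; apply: sum_sub_uniq => //.
  exact: filter_uniq.
by move=> y; rewrite mem_filter => /andP[].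
Qed.

Lemma sum_prefix (F : nat -> R) T N : (forall n, 0 <= F n) -> (T <= N)%N ->
  \sum_(n < T) F n <= \sum_(n < N) F n.
Proof.
move=> F0 TN; rewrite -!(big_mkord xpredT) (big_cat_nat (leq0n T) TN) /=.
by rewrite lerDl; apply: sumr_ge0.
Qed.

Lemma tele (K M E : nat -> R) : (forall n, K n <= M n.+1 - M n + E n) ->
  forall N, \sum_(n < N) K n <= M N - M 0%N + \sum_(n < N) E n.
Proof.
move=> H; elim=> [|N IH]; first by rewrite !big_ord0; lra.
rewrite !big_ord_recr /=; have := H N; lra.
Qed.

Lemma avg (L c : R) (M : nat -> R) T : (forall n, 0 <= M n) ->
  (forall N, (T <= N)%N -> (N < T + T)%N -> L <= M N + c) ->
  T%:R * L <= \sum_(n < T + T) M n + T%:R * c.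
Proof.
move=> M0 H.
have -> : T%:R * L = \sum_(i < T) L by rewrite sumr_const card_ord mulr_natl.
have -> : T%:R * c = \sum_(i < T) c by rewrite sumr_const card_ord mulr_natl.
rewrite big_split_ord /=.
have : \sum_(i < T) M i >= 0 by apply: sumr_ge0.
suff : \sum_(i < T) L <= \sum_(i < T) (M (T + i)%N + c) by rewrite big_split /=; lra.
apply: ler_sum => i _; apply: H => /=; first exact: leq_addr.
by rewrite ltn_add2l.
Qed.

End Sums.

Section Energy.
Variable R : realFieldType.
Variable V : eqType.
Variables (S : seq V) (W : V -> V -> R) (m : V -> R) (phi : V -> R) (a : R).
Hypothesis HWs : forall x y, W x y = W y x.
Hypothesis HW0 : forall x y, 0 <= W x y.
Hypothesis Hm0 : forall x, 0 <= m x.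
Hypothesis Hphi0 : forall x, 0 <= phi x.
Hypothesis Hphi1 : forall x, phi x <= 1.
Hypothesis Ha : 0 < a.
Hypothesis HG : forall x, a ^+ 2 * \sum_(y <- S) W x y * (phi x - phi y) ^+ 2 <= m x.
Variable g : nat -> V -> R.
Hypothesis Hg : forall n x, phi x != 0 ->
  m x * (g n x - g n.+1 x) = \sum_(y <- S) W x y * (g n y - g n x).

Ltac nn := repeat match goal with
 | |- is_true (0 <= _ ^+ 2) => apply: sqr_ge0
 | |- is_true (0 <= _ * _) => apply: mulr_ge0
 | |- is_true (0 <= m _) => apply: Hm0
 | |- is_true (0 <= phi _) => apply: Hphi0
 | |- is_true (0 <= W _ _) => apply: HW0
 end.

Definition Ms (f : V -> R) := \sum_(x <- S) m x * phi x ^+ 2 * f x ^+ 2.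
Definition Ys (f : V -> R) := \sum_(x <- S) m x * f x ^+ 2.
Definition Ks (f : V -> R) := \sum_(x <- S) \sum_(y <- S) W x y * (phi x * f x - phi y * f y) ^+ 2.
Definition Es (f : V -> R) := \sum_(x <- S) \sum_(y <- S) W x y * (f x ^+ 2 * (phi x - phi y) ^+ 2).
Definition Js (f : V -> R) := \sum_(x <- S) \sum_(y <- S) W x y * (phi x * phi y * (f x - f y) ^+ 2).
Definition Xs (f : V -> R) := \sum_(x <- S) \sum_(y <- S) (if phi x != 0 then W x y * (f x - f y) ^+ 2 else 0).

Lemma symW (F : V -> V -> R) : \sum_(x <- S) \sum_(y <- S) W x y * F x y
   = \sum_(x <- S) \sum_(y <- S) W x y * F y x.
Proof.
rewrite exchange_big /=; apply: eq_bigr => x _; apply: eq_bigr => y _.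
by rewrite HWs.
Qed.

Lemma Ms_ge0 f : 0 <= Ms f.
Proof. by apply: sumr_ge0 => x _; nn. Qed.
Lemma Ks_ge0 f : 0 <= Ks f.
Proof. by apply: sumr_ge0 => x _; apply: sumr_ge0 => y _; nn. Qed.
Lemma Es_ge0 f : 0 <= Es f.
Proof. by apply: sumr_ge0 => x _; apply: sumr_ge0 => y _; nn. Qed.
Lemma Js_ge0 f : 0 <= Js f.
Proof. by apply: sumr_ge0 => x _; apply: sumr_ge0 => y _; nn. Qed.
Lemma Xs_ge0 f : 0 <= Xs f.
Proof.
apply: sumr_ge0 => x _; apply: sumr_ge0 => y _; case: ifP => // _.
by nn.
Qed.
Lemma Ys_ge0 f : 0 <= Ys f.
Proof. by apply: sumr_ge0 => x _; nn. Qed.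

Lemma Ms_le_Ys f : Ms f <= Ys f.
Proof.
apply: ler_sum => x _; rewrite -mulrA ler_wpM2l //.
have h0 := Hphi0 x; have h1 := Hphi1 x.
rewrite ler_piMl ?sqr_ge0 //; rewrite expr2; nra.
Qed.

Lemma Js_le_Xs f : Js f <= Xs f.
Proof.
rewrite /Js /Xs; apply: ler_sum => x _; apply: ler_sum => y _.
have [->|nz] := eqVneq (phi x) 0; first by rewrite /= !mul0r mulr0.
rewrite /= ler_wpM2l ?HW0 // -subr_ge0.
have -> : (f x - f y) ^+ 2 - phi x * phi y * (f x - f y) ^+ 2
  = (1 - phi x * phi y) * (f x - f y) ^+ 2 by ring.
apply: mulr_ge0; last exact: sqr_ge0.
have := Hphi0 x; have := Hphi1 x; have := Hphi0 y; have := Hphi1 y; nra.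
Qed.

Lemma Es_le_Ys f : Es f <= a ^-2 * Ys f.
Proof.
rewrite /Es /Ys mulr_sumr; apply: ler_sum => x _.
have -> : \sum_(y <- S) W x y * (f x ^+ 2 * (phi x - phi y) ^+ 2)
   = f x ^+ 2 * \sum_(y <- S) W x y * (phi x - phi y) ^+ 2.
  by rewrite mulr_sumr; apply: eq_bigr => y _; ring.
have := HG x; set G := \sum_(y <- S) _ => HGx.
have a2 : 0 < a ^+ 2 by rewrite exprn_gt0.
have -> : a ^-2 * (m x * f x ^+ 2) = f x ^+ 2 * (a ^-2 * m x) by ring.
rewrite ler_wpM2l ?sqr_ge0 //.
by rewrite ler_pdivlMl.
Qed.

Lemma step_a n : Ks (g n) <= Ms (g n.+1) - Ms (g n) + Es (g n).
Proof.
set b := g n; set b' := g n.+1.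
have Hb : forall x, phi x != 0 -> m x * (b x - b' x) = \sum_(y <- S) W x y * (b y - b x) by exact: Hg.
set Z := \sum_(x <- S) \sum_(y <- S) W x y * (phi x ^+ 2 * b x * (b y - b x)).
have H1 : \sum_(x <- S) m x * phi x ^+ 2 * b x * (b x - b' x) = Z.
  rewrite /Z; apply: eq_bigr => x _.
  have [->|nz] := eqVneq (phi x) 0.
    by rewrite big1 => [|y _]; ring.
  transitivity (phi x ^+ 2 * b x * (m x * (b x - b' x))); first by ring.
  rewrite Hb // mulr_sumr; apply: eq_bigr => y _; ring.
have H2 : Ms b - Ms b' <= 2 * \sum_(x <- S) m x * phi x ^+ 2 * b x * (b x - b' x).
  rewrite /Ms -sumrB mulr_sumr; apply: ler_sum => x _.
  rewrite -subr_ge0.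
  have -> : 2 * (m x * phi x ^+ 2 * b x * (b x - b' x)) -
     (m x * phi x ^+ 2 * b x ^+ 2 - m x * phi x ^+ 2 * b' x ^+ 2)
     = m x * phi x ^+ 2 * (b x - b' x) ^+ 2 by ring.
  by nn.
have Zs : Z = \sum_(x <- S) \sum_(y <- S) W x y * (phi y ^+ 2 * b y * (b x - b y)).
  exact: (symW (fun x y => phi x ^+ 2 * b x * (b y - b x))).
set Cb := \sum_(x <- S) \sum_(y <- S) W x y * (b x * b y * (phi x - phi y) ^+ 2).
have H3 : 2 * Z = - Ks b + Cb.
  have -> : 2 * Z = Z + Z by ring.
  rewrite {2}Zs /Ks /Cb -sumrN -!big_split /=; apply: eq_bigr => x _.
  rewrite -sumrN -!big_split /=; apply: eq_bigr => y _; ring.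
have Es' : Es b = \sum_(x <- S) \sum_(y <- S) W x y * (b y ^+ 2 * (phi y - phi x) ^+ 2).
  exact: (symW (fun x y => b x ^+ 2 * (phi x - phi y) ^+ 2)).
have H5 : 2 * Cb <= 2 * Es b.
  have -> : 2 * Es b = Es b + Es b by ring.
  rewrite {2}Es' /Es /Cb mulr_sumr -big_split /=; apply: ler_sum => x _.
  rewrite mulr_sumr -big_split /=; apply: ler_sum => y _.
  rewrite -subr_ge0.
  have -> : W x y * (b x ^+ 2 * (phi x - phi y) ^+ 2) + W x y * (b y ^+ 2 * (phi y - phi x) ^+ 2)
     - 2 * (W x y * (b x * b y * (phi x - phi y) ^+ 2))
     = W x y * ((b x - b y) * (phi x - phi y)) ^+ 2 by ring.
  by nn.
move: H2; rewrite H1 H3 => H2; lra.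
Qed.

Let h n := fun x => g n x - g n.+1 x.

Lemma step_b n : 2 * Ms (h n) <= Js (g n.+1) - Js (g n) + 2 * a ^-2 * Xs (g n).
Proof.
set b := g n; set b' := g n.+1.
have Hb : forall x, phi x != 0 -> m x * (b x - b' x) = \sum_(y <- S) W x y * (b y - b x) by exact: Hg.
have hE : forall x, h n x = b x - b' x by [].
set Q4 := \sum_(x <- S) \sum_(y <- S) W x y * (phi x * phi y * (b x - b y) * h n x).
have HJ : Js b - Js b' <= 4 * Q4.
  have -> : 4 * Q4 = Q4 + Q4 + Q4 + Q4 by ring.
  have Qs : Q4 = \sum_(x <- S) \sum_(y <- S) W x y * (- (phi x * phi y * (b x - b y) * h n y)).
    transitivity (\sum_(x <- S) \sum_(y <- S) W x y * (phi y * phi x * (b y - b x) * h n y)).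
      exact: (symW (fun x y => phi x * phi y * (b x - b y) * h n x)).
    by apply: eq_bigr => x _; apply: eq_bigr => y _; congr (_ * _); ring.
  rewrite {2}Qs {3}Qs /Js -sumrB -!big_split /=; apply: ler_sum => x _.
  rewrite -sumrB -!big_split /=; apply: ler_sum => y _.
  rewrite -subr_ge0 !hE.
  have -> : W x y * (phi x * phi y * (b x - b y) * (b x - b' x)) +
     W x y * - (phi x * phi y * (b x - b y) * (b y - b' y)) +
     W x y * (phi x * phi y * (b x - b y) * (b x - b' x)) +
     W x y * - (phi x * phi y * (b x - b y) * (b y - b' y)) -
     (W x y * (phi x * phi y * (b x - b y) ^+ 2) - W x y * (phi x * phi y * (b' x - b' y) ^+ 2))
     = W x y * (phi x * phi y * ((b x - b y) - (b' x - b' y)) ^+ 2) by ring.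
  by nn.
have HM : \sum_(x <- S) \sum_(y <- S) W x y * (phi x ^+ 2 * (b x - b y) * h n x) = - Ms (h n).
  rewrite /Ms -sumrN; apply: eq_bigr => x _.
  have [->|nz] := eqVneq (phi x) 0.
    by rewrite big1 => [|y _]; ring.
  transitivity (phi x ^+ 2 * h n x * \sum_(y <- S) W x y * (b x - b y)).
    by rewrite mulr_sumr; apply: eq_bigr => y _; ring.
  have -> : \sum_(y <- S) W x y * (b x - b y) = - \sum_(y <- S) W x y * (b y - b x).
    by rewrite -sumrN; apply: eq_bigr => y _; ring.
  rewrite -Hb // hE; ring.
set Cr := \sum_(x <- S) \sum_(y <- S) W x y * (phi x * (phi y - phi x) * (b x - b y) * h n x).
have HQ : Q4 = - Ms (h n) + Cr.
  rewrite -HM /Cr -big_split /=; apply: eq_bigr => x _.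
  rewrite -big_split /=; apply: eq_bigr => y _; ring.
have HC : 2 * Cr <= Ms (h n) + a ^-2 * Xs b.
  have L1 : 2 * Cr <= \sum_(x <- S) \sum_(y <- S)
      (W x y * (a ^+ 2 * phi x ^+ 2 * h n x ^+ 2 * (phi x - phi y) ^+ 2)
       + (if phi x != 0 then a ^-2 * (W x y * (b x - b y) ^+ 2) else 0)).
    rewrite /Cr mulr_sumr; apply: ler_sum => x _; rewrite mulr_sumr; apply: ler_sum => y _.
    have [->|nz] := eqVneq (phi x) 0.
      rewrite /= addr0 -subr_ge0.
      have -> : W x y * (a ^+ 2 * 0 ^+ 2 * h n x ^+ 2 * (0 - phi y) ^+ 2) -
        2 * (W x y * (0 * (phi y - 0) * (b x - b y) * h n x)) = 0 by ring.
      by [].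
    rewrite /= -subr_ge0.
    have an : a != 0 by rewrite gt_eqF.
    have -> : W x y * (a ^+ 2 * phi x ^+ 2 * h n x ^+ 2 * (phi x - phi y) ^+ 2) +
       a ^-2 * (W x y * (b x - b y) ^+ 2) -
       2 * (W x y * (phi x * (phi y - phi x) * (b x - b y) * h n x))
       = W x y * (a * phi x * (phi y - phi x) * h n x - (b x - b y) / a) ^+ 2.
      by field.
    by nn.
  apply: (le_trans L1).
  under eq_bigr => x _ do rewrite big_split /=.
  rewrite big_split /= [X in _ <= _ + X]mulr_sumr; apply: lerD.
    apply: ler_sum => x _.
    have -> : \sum_(y <- S) W x y * (a ^+ 2 * phi x ^+ 2 * h n x ^+ 2 * (phi x - phi y) ^+ 2)
       = phi x ^+ 2 * h n x ^+ 2 * (a ^+ 2 * \sum_(y <- S) W x y * (phi x - phi y) ^+ 2).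
      by rewrite !mulr_sumr; apply: eq_bigr => y _; ring.
    have -> : m x * phi x ^+ 2 * h n x ^+ 2 = phi x ^+ 2 * h n x ^+ 2 * m x by ring.
    by rewrite ler_wpM2l ?HG //; nn.
  apply: ler_sum => x _; rewrite mulr_sumr; apply: ler_sum => y _.
  by case: ifP => _; rewrite ?mulr0.
suff : Js b - Js b' <= - 2 * Ms (h n) + 2 * a ^-2 * Xs b by lra.
apply: (le_trans HJ); rewrite HQ; lra.
Qed.

Lemma core_a T : (0 < T)%N ->
  \sum_(n < T) Ks (g n) <= T%:R^-1 * \sum_(n < T + T) Ys (g n) + a ^-2 * \sum_(n < T + T) Ys (g n).
Proof.
move=> T0.
have tl := @tele _ (fun n => Ks (g n)) (fun n => Ms (g n)) (fun n => Es (g n)) step_a.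
set L := \sum_(n < T) Ks (g n).
set c := \sum_(n < T + T) Es (g n).
have HL : forall N, (T <= N)%N -> (N < T + T)%N -> L <= Ms (g N) + c.
  move=> N TN NT.
  have e1 : L <= \sum_(n < N) Ks (g n) by apply: (@sum_prefix _ (fun n => Ks (g n))) => // ?; apply: Ks_ge0.
  have e2 : \sum_(n < N) Es (g n) <= c.
    by apply: (@sum_prefix _ (fun n => Es (g n))) => //[?|]; [apply: Es_ge0 | apply: ltnW].
  have := tl N; have := Ms_ge0 (g 0%N); lra.
have := @avg _ _ _ _ _ (fun n => Ms_ge0 (g n)) HL.
have Tp : 0 < T%:R :> R by rewrite ltr0n.
move=> HA.
have HL2 : L <= T%:R^-1 * \sum_(n < T + T) Ms (g n) + c.
  rewrite -(ler_pM2l Tp) mulrDr mulrA mulfV ?gt_eqF // mul1r //.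
have e3 : \sum_(n < T + T) Ms (g n) <= \sum_(n < T + T) Ys (g n).
  by apply: ler_sum => n _; apply: Ms_le_Ys.
have e4 : c <= a ^-2 * \sum_(n < T + T) Ys (g n).
  by rewrite /c mulr_sumr; apply: ler_sum => n _; apply: Es_le_Ys.
have Ti : 0 <= T%:R^-1 :> R by rewrite invr_ge0 ler0n.
have e5 := ler_wpM2l Ti e3.
lra.
Qed.

Lemma core_b T : (0 < T)%N ->
  2 * \sum_(n < T) Ms (h n) <= (T%:R^-1 + 2 * a ^-2) * \sum_(n < T + T) Xs (g n).
Proof.
move=> T0.
have tl := @tele _ (fun n => 2 * Ms (h n)) (fun n => Js (g n)) (fun n => 2 * a ^-2 * Xs (g n)) step_b.
set L := \sum_(n < T) 2 * Ms (h n).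
set c := \sum_(n < T + T) 2 * a ^-2 * Xs (g n).
have HL : forall N, (T <= N)%N -> (N < T + T)%N -> L <= Js (g N) + c.
  move=> N TN NT.
  have e1 : L <= \sum_(n < N) 2 * Ms (h n).
    apply: (@sum_prefix _ (fun n => 2 * Ms (h n))) => // ?; rewrite mulr_ge0 //; apply: Ms_ge0.
  have e2 : \sum_(n < N) 2 * a ^-2 * Xs (g n) <= c.
    apply: (@sum_prefix _ (fun n => 2 * a ^-2 * Xs (g n))) => //[?|]; last by apply: ltnW.
    apply: mulr_ge0; [rewrite mulr_ge0 // invr_ge0 exprn_ge0 // ltW // | apply: Xs_ge0].
  have := tl N; have := Js_ge0 (g 0%N); lra.
have := @avg _ _ _ _ _ (fun n => Js_ge0 (g n)) HL.
have Tp : 0 < T%:R :> R by rewrite ltr0n.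
move=> HA.
have HL2 : L <= T%:R^-1 * \sum_(n < T + T) Js (g n) + c.
  rewrite -(ler_pM2l Tp) mulrDr mulrA mulfV ?gt_eqF // mul1r //.
have e3 : \sum_(n < T + T) Js (g n) <= \sum_(n < T + T) Xs (g n).
  by apply: ler_sum => n _; apply: Js_le_Xs.
have Ti : 0 <= T%:R^-1 :> R by rewrite invr_ge0 ler0n.
have e5 := ler_wpM2l Ti e3.
have -> : 2 * \sum_(n < T) Ms (h n) = L by rewrite /L mulr_sumr.
have ec : c = 2 * a ^-2 * \sum_(n < T + T) Xs (g n) by rewrite /c mulr_sumr.
lra.
Qed.

End Energy.

Section Graph.
Variables (R : realType) (V : eqType) (nb : V -> seq V) (w : V -> V -> R)
  (m : V -> R) (rho : V -> V -> R).
Hypothesis Hu : forall x, uniq (nb x).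
Hypothesis Hsym : forall x y, (y \in nb x) = (x \in nb y).
Hypothesis Hw : forall x y, y \in nb x -> w x y = w y x /\ 0 < w x y.
Hypothesis Hm : forall x, 0 < m x.
Hypothesis Hrs : forall x y, rho x y = rho y x.
Hypothesis Hrt : forall x y z, rho x z <= rho x y + rho y z.
Hypothesis Hrge : forall x y, 0 <= rho x y.
Hypothesis Hint : forall x, \sum_(y <- nb x) w x y * rho x y ^+ 2 <= m x.
Variable s : R.
Hypothesis Hs : forall x y, y \in nb x -> rho x y <= s.
Variable p : V.
Variable ball : R -> seq V.
Hypothesis Hbu : forall r, uniq (ball r).
Hypothesis Hbm : forall r y, (y \in ball r) = (rho y p <= r).

Definition Wg x y := if y \in nb x then w x y else 0.

Lemma Wg_sym x y : Wg x y = Wg y x.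
Proof.
rewrite /Wg -Hsym; case: ifP => // h; by case: (Hw h).
Qed.

Lemma Wg_ge0 x y : 0 <= Wg x y.
Proof. rewrite /Wg; case: ifP => // h; case: (Hw h) => _ /ltW //. Qed.

Definition clamp (u : R) := if u <= 1 then 1 else if 2 <= u then 0 else 2 - u.

Lemma clamp_ge0 u : 0 <= clamp u.
Proof. rewrite /clamp; have [h1|h1] := lerP u 1; have [h2|h2] := lerP 2 u => //=; lra. Qed.
Lemma clamp_le1 u : clamp u <= 1.
Proof. rewrite /clamp; have [h1|h1] := lerP u 1; have [h2|h2] := lerP 2 u => //=; lra. Qed.

Lemma clamp_lip u v e : - e <= u - v -> u - v <= e ->
  - e <= clamp u - clamp v /\ clamp u - clamp v <= e.
Proof.
move=> h h'; rewrite /clamp.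
have [h1|h1] := lerP u 1; have [h2|h2] := lerP 2 u;
have [h3|h3] := lerP v 1; have [h4|h4] := lerP 2 v => /=; split; lra.
Qed.

Definition cut c x := clamp (rho x p / c).

Lemma cut_lip c x y : 0 < c -> c ^+ 2 * (cut c x - cut c y) ^+ 2 <= rho x y ^+ 2.
Proof.
move=> c0.
have h1 : rho x p - rho y p <= rho x y by have := Hrt x y p; lra.
have h2 : rho y p - rho x p <= rho x y by have := Hrt y x p; rewrite (Hrs y x); lra.
have ci : 0 < c^-1 by rewrite invr_gt0.
have e1 : - (rho x y / c) <= rho x p / c - rho y p / c.
  rewrite -mulrBl -mulNr ler_pM2r //; lra.
have e2 : rho x p / c - rho y p / c <= rho x y / c.
  rewrite -mulrBl ler_pM2r //.
have [l1 l2] := clamp_lip e1 e2.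
rewrite /cut; set d := clamp _ - clamp _ in l1 l2 *.
have l1' : - rho x y <= c * d.
  have := ler_wpM2l (ltW c0) l1; rewrite mulrN mulrCA mulfV ?gt_eqF // mulr1 //.
have l2' : c * d <= rho x y.
  have := ler_wpM2l (ltW c0) l2; rewrite mulrCA mulfV ?gt_eqF // mulr1 //.
rewrite -exprMn; have := Hrge x y; nra.
Qed.

Lemma cut_ge0 c x : 0 <= cut c x. Proof. exact: clamp_ge0. Qed.
Lemma cut_le1 c x : cut c x <= 1. Proof. exact: clamp_le1. Qed.

Lemma cut_one c x : 0 < c -> rho x p <= c -> cut c x = 1.
Proof.
move=> c0 h; rewrite /cut /clamp ifT //.
by rewrite ler_pdivrMr // mul1r.
Qed.

Lemma cut_nz c x : 0 < c -> cut c x != 0 -> rho x p < 2 * c.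
Proof.
move=> c0; rewrite /cut /clamp; case: (ltrP (rho x p) (2 * c)) => // h.
have h2 : 2 <= rho x p / c by rewrite ler_pdivlMr.
rewrite ifF ?h2 ?eqxx //.
apply/negbTE; rewrite -ltNge; apply: (lt_le_trans _ h2); lra.
Qed.

Lemma HG_cut c (S : seq V) x : 0 < c -> uniq S ->
  c ^+ 2 * \sum_(y <- S) Wg x y * (cut c x - cut c y) ^+ 2 <= m x.
Proof.
move=> c0 uS; apply: le_trans (Hint x).
rewrite mulr_sumr.
have -> : \sum_(i <- S) c ^+ 2 * (Wg x i * (cut c x - cut c i) ^+ 2)
   = \sum_(i <- S) (if i \in nb x then w x i * (c ^+ 2 * (cut c x - cut c i) ^+ 2) else 0).
  by apply: eq_bigr => y _; rewrite /Wg; case: ifP => _; ring.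
apply: (le_trans (sum_filter_le (G := fun i => w x i * (c ^+ 2 * (cut c x - cut c i) ^+ 2)) uS (Hu x) _)).
  move=> y /Hw [_ /ltW h]; apply: mulr_ge0 => //; apply: mulr_ge0; [exact: sqr_ge0|exact: sqr_ge0].
rewrite big_seq_cond [X in _ <= X]big_seq_cond; apply: ler_sum => y /andP[yn _].
rewrite ler_wpM2l ?cut_lip //; by case: (Hw yn) => _ /ltW.
Qed.

Lemma intS1 (n : nat) : (- (n%:Z) - 1 = - (n.+1)%:Z)%R.
Proof. by rewrite -addn1 PoszD opprD. Qed.

Lemma lap_sum (f : V -> R) x (S : seq V) : uniq S -> {subset nb x <= S} ->
  m x * laplacian nb w m f x = \sum_(y <- S) Wg x y * (f y - f x).
Proof.
move=> uS sub.
have -> : \sum_(y <- S) Wg x y * (f y - f x)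
   = \sum_(y <- S) (if y \in nb x then w x y * (f y - f x) else 0).
  by apply: eq_bigr => y _; rewrite /Wg; case: ifP => _; ring.
rewrite sum_filter_eq // /laplacian mulr_sumr; apply: eq_bigr => y _.
have mn : m x != 0 by rewrite gt_eqF.
by field.
Qed.

Definition ST (f : V -> int -> R) (r : nat) :=
  \sum_(n < r ^ 2) \sum_(x <- ball r%:R) m x * f x (- (n%:Z)) ^+ 2.

Lemma one_le_sum (S : seq V) (F : V -> R) x : uniq S -> x \in S ->
  (forall y, 0 <= F y) -> F x <= \sum_(y <- S) F y.
Proof.
move=> uS xS F0.
have := @sum_sub_uniq R V [:: x] S F erefl uS _ (fun y _ => F0 y).
rewrite big_seq1; apply; by move=> y; rewrite inE => /eqP ->.
Qed.

Lemma one_le_sum_ord (F : nat -> R) n N : (n < N)%N ->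
  (forall k, 0 <= F k) -> F n <= \sum_(k < N) F k.
Proof.
move=> nN F0; apply: le_trans (sum_prefix F0 nN).
by rewrite big_ord_recr /= lerDr; apply: sumr_ge0.
Qed.

Lemma step (g : V -> int -> R) (r : nat) :
  (forall x (t : int), t <= 0 -> Dt g x t = laplacian nb w m (fun y => g y t) x) ->
  (0 < r)%N -> s <= r%:R ->
  r%:R ^+ 4 * ST (Dt g) r <= ST g (7 * r).
Proof.
move=> Hg r0 sr.
set Rr := r%:R.
have Rr1 : 1 <= Rr by rewrite ler1n.
have Rr0 : 0 < Rr by lra.
set S := ball (7 * r)%:R.
have S7 : (7 * r)%:R = 7 * Rr :> R by rewrite natrM.
have uS : uniq S := Hbu _.
pose gs n x := g x (- (n%:Z)).
have Dtg : forall n x, Dt g x (- (n%:Z)) = gs n x - gs n.+1 x.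
  by move=> n x; rewrite /Dt intS1.
have nbS : forall x, rho x p < 6 * Rr -> {subset nb x <= S}.
  move=> x hx y yn; rewrite /S Hbm S7.
  have := Hs yn; have := Hrt y x p; rewrite (Hrs y x); lra.
have heat : forall n x, {subset nb x <= S} ->
    m x * (gs n x - gs n.+1 x) = \sum_(y <- S) Wg x y * (gs n y - gs n x).
  move=> n x sub; rewrite -Dtg Hg ?oppr_le0 ?ler0n //.
  exact: (lap_sum (fun y => g y (- (n%:Z))) uS sub).
have R3 : 0 < 3 * Rr by lra.
have T1 : (1 <= r ^ 2)%N by rewrite expn_gt0 r0.
have h26 : 2 * Rr <= 6 * Rr by lra.
have Hb := @core_b R V S Wg m (cut Rr) Rr Wg_sym Wg_ge0 (fun x => ltW (Hm x))
  (fun x => cut_ge0 _ x) (fun x => cut_le1 _ x) Rr0 (fun x => HG_cut x Rr0 uS) gs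
  (fun n x nz => heat n x (nbS x (lt_le_trans (cut_nz Rr0 nz) h26))) _ T1.
have h66 : 2 * (3 * Rr) <= 6 * Rr by lra.
have T2 : (1 <= r ^ 2 + r ^ 2)%N by rewrite addn_gt0 T1.
have Ha := @core_a R V S Wg m (cut (3 * Rr)) (3 * Rr) Wg_sym Wg_ge0 (fun x => ltW (Hm x))
  (fun x => cut_ge0 _ x) (fun x => cut_le1 _ x) R3 (fun x => HG_cut x R3 uS) gs
  (fun n x nz => heat n x (nbS x (lt_le_trans (cut_nz R3 nz) h66))) _ T2.
have XK : forall n, Xs S Wg (cut Rr) (gs n) <= Ks S Wg (cut (3 * Rr)) (gs n).
  move=> n; rewrite /Xs /Ks; apply: ler_sum => x _; apply: ler_sum => y _.
  have [e|nz] := eqVneq (cut Rr x) 0.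
    by rewrite /=; apply: mulr_ge0; [exact: Wg_ge0 | exact: sqr_ge0].
  rewrite /= /Wg; case: ifP => yn; last by rewrite !mul0r.
  have hx := cut_nz Rr0 nz.
  have -> : cut (3 * Rr) x = 1 by apply: cut_one => //; lra.
  have -> : cut (3 * Rr) y = 1.
    apply: cut_one => //; have := Hs yn; have := Hrt y x p; rewrite (Hrs y x); lra.
  by rewrite !mul1r.
set M := \sum_(n < r ^ 2) Ms S m (cut Rr) _ in Hb.
set X := \sum_(n < r ^ 2 + r ^ 2) Xs S Wg (cut Rr) (gs n) in Hb.
set K := \sum_(n < r ^ 2 + r ^ 2) Ks S Wg (cut (3 * Rr)) (gs n) in Ha.
set Y := \sum_(n < r ^ 2 + r ^ 2 + (r ^ 2 + r ^ 2)) Ys S m (gs n) in Ha.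
have F3 : X <= K by apply: ler_sum => n _; exact: XK.
have F4 : ST (Dt g) r <= M.
  rewrite /ST /M; apply: ler_sum => n _.
  have -> : \sum_(x <- ball Rr) m x * Dt g x (- (n%:Z)) ^+ 2
      = \sum_(x <- ball Rr) m x * cut Rr x ^+ 2 * (gs n x - gs n.+1 x) ^+ 2.
    rewrite big_seq [RHS]big_seq; apply: eq_bigr => x xb.
    rewrite Dtg cut_one // -?Hbm // expr1n mulr1 //.
  apply: sum_sub_uniq => //; first by move=> x; rewrite /S !Hbm S7; lra.
  by move=> x _; apply: mulr_ge0; [apply: mulr_ge0; [exact: ltW | exact: sqr_ge0] | exact: sqr_ge0].
have F5 : Y <= ST g (7 * r).
  rewrite /Y /ST; apply: (@sum_prefix R (fun n => Ys S m (gs n))); last by rewrite expnMn; nia.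
  by move=> n; apply: Ys_ge0 => x; exact: ltW.
have tau0 : 0 < Rr ^+ 2 by rewrite exprn_gt0.
have eT : (r ^ 2)%:R = Rr ^+ 2 :> R by rewrite natrX.
have eT2 : (r ^ 2 + r ^ 2)%:R = 2 * Rr ^+ 2 :> R by rewrite natrD natrX; ring.
have F1 : 2 * M * Rr ^+ 2 <= 3 * X.
  rewrite -ler_pdivlMr //; apply: (le_trans Hb); rewrite eT le_eqVlt; apply/orP; left; apply/eqP.
  by field; rewrite gt_eqF.
have F2 : K * Rr ^+ 2 <= 11 / 18 * Y.
  rewrite -ler_pdivlMr //; apply: (le_trans Ha); rewrite eT2 le_eqVlt; apply/orP; left; apply/eqP.
  by field; rewrite gt_eqF.
have Y0 : 0 <= Y by apply: sumr_ge0 => n _; apply: Ys_ge0 => x; exact: ltW.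
have L0 : 0 <= ST (Dt g) r.
  by apply: sumr_ge0 => n _; apply: sumr_ge0 => x _; apply: mulr_ge0; [exact: ltW | exact: sqr_ge0].
have -> : Rr ^+ 4 = Rr ^+ 2 * Rr ^+ 2 by rewrite -exprD.
set t := Rr ^+ 2 in tau0 F1 F2 *.
set L := ST (Dt g) r in F4 L0 *.
have G1 : t * L <= t * M by rewrite ler_wpM2l // ltW.
have G2 : t * (2 * M * t) <= t * (3 * X) by rewrite ler_wpM2l // ltW.
have G3 : X * t <= K * t by rewrite ler_wpM2r // ltW.
nra.
Qed.

Definition anc (g : V -> int -> R) :=
  forall x (t : int), t <= 0 -> Dt g x t = laplacian nb w m (fun y => g y t) x.

Lemma Dt_anc g : anc g -> anc (Dt g).
Proof.
move=> Hg x t t0.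
have t1 : t - 1 <= 0 by apply: le_trans t0; rewrite gerDl lerN10.
rewrite {1}/Dt Hg // Hg // /laplacian -sumrB; apply: eq_bigr => y _.
rewrite /Dt; ring.
Qed.

Lemma Dtq_anc g j : anc g -> anc (Dtq j g).
Proof. move=> Hg; elim: j => [|j IH] //=; exact: Dt_anc. Qed.

Lemma ST_ge0 f r : 0 <= ST f r.
Proof.
by apply: sumr_ge0 => n _; apply: sumr_ge0 => x _; apply: mulr_ge0; [exact: ltW | exact: sqr_ge0].
Qed.

Lemma iter_step (u : V -> int -> R) (r0 : nat) : anc u -> (0 < r0)%N -> s <= r0%:R ->
  forall j r, (r0 <= r)%N -> (r%:R ^+ 4) ^+ j * ST (Dtq j u) r <= ST u (7 ^ j * r).
Proof.
move=> Hu0 r00 sr0; elim=> [|j IH] r rr0.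
  by rewrite expr0 mul1r expn0 mul1n.
have r0' : (0 < r)%N by apply: leq_trans rr0.
have sr : s <= r%:R by apply: (le_trans sr0); rewrite ler_nat.
have St := step (Dtq_anc j Hu0) r0' sr.
have h7 : (r <= 7 * r)%N by rewrite leq_pmull.
have IH7 := IH (7 * r)%N (leq_trans rr0 h7).
rewrite expnSr -mulnA.
apply: le_trans IH7.
rewrite exprSr -mulrA.
have e1 : (r%:R ^+ 4) ^+ j * (r%:R ^+ 4 * ST (Dtq j.+1 u) r)
   <= (r%:R ^+ 4) ^+ j * ST (Dtq j u) (7 * r).
  by rewrite ler_wpM2l // exprn_ge0 // exprn_ge0.
apply: (le_trans e1); rewrite ler_wpM2r ?ST_ge0 //.
apply: lerXn2r; rewrite ?nnegrE ?exprn_ge0 //.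
apply: lerXn2r; rewrite ?nnegrE ?ler_nat //.
Qed.

Variables (x0 : V) (alpha C k Cu : R) (q : nat) (u : V -> int -> R).
Hypothesis Hvol : poly_volume_growth m rho x0 alpha C.
Hypothesis k0 : 0 < k.
Hypothesis Hanc : anc u.
Hypothesis HCu : forall r : R, 0 < r -> forall y (t : int), rho y p <= r ->
  - (r ^+ 2) <= t%:~R -> t <= 0 -> `|u y t| <= Cu * powR (1 + r) k.
Hypothesis Hq : 2 * k + alpha + 2 < 4 * q%:R.

Definition Lam := ((7 ^ q)%:R : R) ^+ 2 * (Cu ^+ 2 * (powR ((7 ^ q)%:R + 1) k) ^+ 2)
   * (`|C| * (powR ((7 ^ q)%:R + 1 + rho p x0) alpha + 1)).

Lemma Lam_ge0 : 0 <= Lam.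
Proof.
rewrite /Lam; apply: mulr_ge0; first apply: mulr_ge0.
- exact: sqr_ge0.
- by apply: mulr_ge0; exact: sqr_ge0.
- apply: mulr_ge0 => //; apply: addr_ge0 => //; exact: powR_ge0.
Qed.

Lemma growth (r : nat) : (0 < r)%N ->
  ST u (7 ^ q * r) <= Lam * powR r%:R (2 + k * 2 + alpha).
Proof.
move=> r0.
set K := (7 ^ q)%N.
set Kr := (K%:R : R).
set Rr := (r%:R : R).
set d := rho p x0.
have Rr1 : 1 <= Rr by rewrite ler1n.
have Kr1 : 1 <= Kr by rewrite ler1n expn_gt0.
have d0 : 0 <= d by apply: Hrge.
set rp := ((K * r)%:R : R).
have erp : rp = Kr * Rr by rewrite /rp natrM.
have rp0 : 0 < rp by rewrite erp; apply: mulr_gt0; lra.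
set B := Cu * powR (1 + rp) k.
set Vm := \sum_(y <- ball rp) m y.
have Vm0 : 0 <= Vm by apply: sumr_ge0 => y _; exact: ltW.
have S1 : ST u (K * r) <= ((K * r) ^ 2)%:R * (Vm * B ^+ 2).
  rewrite /ST.
  have -> : ((K * r) ^ 2)%:R * (Vm * B ^+ 2) = \sum_(n < (K * r) ^ 2) (Vm * B ^+ 2).
    by rewrite sumr_const card_ord mulr_natl.
  apply: ler_sum => n _; rewrite /Vm mulr_suml.
  rewrite big_seq [X in _ <= X]big_seq; apply: ler_sum => y yb.
  apply: ler_wpM2l; first exact: ltW (Hm y).
  have hb : `|u y (- (n%:Z))| <= B.
    apply: HCu => //; first by rewrite -Hbm.
      rewrite intrN lerN2 -natrX ler_nat; exact: ltnW.
    by rewrite oppr_le0.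
  rewrite -[u y _ ^+ 2]ger0_norm ?sqr_ge0 // normrX.
  by apply: lerXn2r; rewrite ?nnegrE // (le_trans _ hb).
have S2 : Vm <= C * powR (1 + (rp + d)) alpha.
  apply: Hvol; first by apply: ltr_wpDr.
    exact: Hbu.
  move=> y; rewrite Hbm => hy; apply: le_trans (Hrt y p x0) _; rewrite -/d; lra.
have S3 : powR (1 + (rp + d)) alpha <= (powR (Kr + 1 + d) alpha + 1) * powR Rr alpha.
  have P0 : 0 <= powR Rr alpha by exact: powR_ge0.
  have [a0|a0] := lerP 0 alpha.
    have e : 1 + (rp + d) <= (Kr + 1 + d) * Rr.
      rewrite erp; have : d <= d * Rr by rewrite ler_peMr.
      lra.
    apply: le_trans (ge0_ler_powR a0 _ _ e) _; rewrite ?nnegrE; try lra.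
    rewrite powRM; try lra.
  have e : Rr <= 1 + (rp + d).
    rewrite erp; have : Rr <= Kr * Rr by rewrite ler_peMl //; lra.
    lra.
  apply: le_trans (_ : powR Rr alpha <= _); last first.
    by rewrite ler_peMl // lerDr powR_ge0.
  have na : 0 <= - alpha by lra.
  have ea : alpha = - (- alpha) by rewrite opprK.
  rewrite ea (powRN Rr) (powRN (1 + (rp + d))) lef_pV2 ?posrE ?powR_gt0 //; try lra.
  apply: ge0_ler_powR => //; rewrite nnegrE; lra.
have S4 : B ^+ 2 <= Cu ^+ 2 * (powR (Kr + 1) k) ^+ 2 * (powR Rr k) ^+ 2.
  have -> : B ^+ 2 = Cu ^+ 2 * (powR (1 + rp) k) ^+ 2 by exact: exprMn.
  have -> : Cu ^+ 2 * (powR (Kr + 1) k) ^+ 2 * (powR Rr k) ^+ 2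
    = Cu ^+ 2 * (powR (Kr + 1) k * powR Rr k) ^+ 2 by ring.
  apply: ler_wpM2l; first exact: sqr_ge0.
  apply: lerXn2r; [by rewrite nnegrE powR_ge0 | by rewrite nnegrE mulr_ge0 ?powR_ge0 |].
  rewrite -powRM; try lra.
  apply: ge0_ler_powR; rewrite ?nnegrE; try lra.
    exact: ltW k0.
have S5 : ((K * r) ^ 2)%:R = Kr ^+ 2 * Rr ^+ 2 :> R by rewrite natrX natrM exprMn.
have eP : powR Rr (2 + k * 2 + alpha) = Rr ^+ 2 * (powR Rr k) ^+ 2 * powR Rr alpha.
  have Rn : Rr != 0 by rewrite gt_eqF //; lra.
  rewrite powRD ?Rn ?implybT // powRD ?Rn ?implybT //.
  rewrite -(powR_mulrn 2 (ltW (lt_le_trans ltr01 Rr1))) powRrM -powR_mulrn ?powR_ge0 //.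
apply: (le_trans S1); rewrite eP S5 /Lam.
have CV : Vm <= `|C| * ((powR (Kr + 1 + d) alpha + 1) * powR Rr alpha).
  apply: (le_trans S2); apply: le_trans (_ : `|C| * powR (1 + (rp + d)) alpha <= _).
    by rewrite ler_wpM2r ?powR_ge0 // ler_norm.
  by rewrite ler_wpM2l.
have Q1 : Vm * B ^+ 2 <= (`|C| * ((powR (Kr + 1 + d) alpha + 1) * powR Rr alpha))
     * (Cu ^+ 2 * (powR (Kr + 1) k) ^+ 2 * (powR Rr k) ^+ 2).
  by apply: ler_pM => //; exact: sqr_ge0.
apply: le_trans (_ : Kr ^+ 2 * Rr ^+ 2 * ((`|C| * ((powR (Kr + 1 + d) alpha + 1) * powR Rr alpha))
     * (Cu ^+ 2 * (powR (Kr + 1) k) ^+ 2 * (powR Rr k) ^+ 2)) <= _).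
  by rewrite ler_wpM2l // mulr_ge0 // sqr_ge0.
rewrite le_eqVlt; apply/orP; left; apply/eqP; rewrite /Kr /d; ring.
Qed.

Lemma main_zero x (t : int) : t <= 0 -> Dtq q u x t = 0.
Proof.
move=> t0.
set n := `|t|%N.
have tn : t = - (n%:Z) by rewrite /n lez0_abs // opprK.
set D := Dtq q u x t.
set r0 := (Num.bound `|s|).+1.
have r00 : (0 < r0)%N by [].
have sr0 : s <= r0%:R.
  have := archi_boundP (normr_ge0 s); rewrite /r0 -addn1 natrD.
  have := ler_norm s; lra.
suff : m x * D ^+ 2 <= 0.
  move=> h; have hm := Hm x.
  have : D ^+ 2 <= 0.
    by rewrite -(ler_pM2l hm) mulr0.
  move=> h2; have h3 : D ^+ 2 = 0 by apply/le_anti; rewrite h2 sqr_ge0.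
  by apply/eqP; rewrite -sqrf_eq0 h3.
apply/ler_addgt0Pr => eps eps0; rewrite add0r.
set del := 4 * q%:R - (2 + k * 2 + alpha).
have del0 : 0 < del.
  have e : 2 + k * 2 + alpha = 2 * k + alpha + 2 by ring.
  by rewrite /del subr_gt0 e.
have L0 := Lam_ge0.
set rho1 := powR (Lam / eps + 1) del^-1.
set r := (r0 + n.+1 + Num.bound (rho x p) + Num.bound rho1)%N.
have rr0 : (r0 <= r)%N by rewrite /r -!addnA leq_addr.
have nr : (n < r)%N.
  by rewrite /r; apply: (leq_trans _ (leq_addr _ _)); apply: (leq_trans _ (leq_addr _ _)); rewrite ltn_addl.
have r0' : (0 < r)%N by apply: leq_trans rr0.
set Rr := (r%:R : R).
have Rr1 : 1 <= Rr by rewrite ler1n.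
have xr : rho x p <= Rr.
  have := archi_boundP (Hrge x p); move/ltW => h; apply: (le_trans h).
  rewrite ler_nat /r; apply: (leq_trans _ (leq_addr _ _)); exact: leq_addl.
have rr1 : rho1 <= Rr.
  have := archi_boundP (powR_ge0 (Lam / eps + 1) del^-1); move/ltW => h; apply: (le_trans h).
  by rewrite ler_nat /r leq_addl.
have HA : m x * D ^+ 2 <= ST (Dtq q u) r.
  rewrite /ST.
  have nr2 : (n < r ^ 2)%N.
    apply: (leq_trans nr); rewrite expnS expn1 leq_pmulr //.
  apply: le_trans (one_le_sum_ord (F := fun j => \sum_(y <- ball r%:R) m y * Dtq q u y (- (j%:Z)) ^+ 2) nr2 _).
    rewrite /D tn; apply: (one_le_sum (F := fun y => m y * Dtq q u y (- (n%:Z)) ^+ 2)) => //.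
      by rewrite Hbm.
    by move=> y; apply: mulr_ge0; [exact: ltW | exact: sqr_ge0].
  by move=> j; apply: sumr_ge0 => y _; apply: mulr_ge0; [exact: ltW | exact: sqr_ge0].
have HB := iter_step Hanc r00 sr0 q rr0.
have HG := growth r0'.
have P1pos : 0 < powR Rr (2 + k * 2 + alpha) by apply: powR_gt0; lra.
have Pdpos : 0 < powR Rr del by apply: powR_gt0; lra.
have e4 : (Rr ^+ 4) ^+ q = powR Rr (2 + k * 2 + alpha) * powR Rr del.
  have Rn : Rr != 0 by rewrite gt_eqF //; lra.
  rewrite -powRD ?Rn ?implybT // -exprM -powR_mulrn; last lra.
  by congr powR; rewrite /del natrM; ring.
have Q4 : 0 <= (Rr ^+ 4) ^+ q by apply: exprn_ge0; apply: exprn_ge0; lra.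
have H1 : m x * D ^+ 2 * (powR Rr (2 + k * 2 + alpha) * powR Rr del)
    <= Lam * powR Rr (2 + k * 2 + alpha).
  rewrite -e4; apply: le_trans HG; apply: le_trans HB.
  by rewrite mulrC; apply: ler_wpM2l.
have H2 : m x * D ^+ 2 * powR Rr del <= Lam.
  rewrite -(ler_pM2r P1pos); apply: le_trans H1.
  by rewrite le_eqVlt; apply/orP; left; apply/eqP; ring.
have H3 : Lam / eps + 1 <= powR Rr del.
  have hb : 0 <= Lam / eps + 1 by apply: addr_ge0 => //; apply: divr_ge0 => //; exact: ltW.
  have := ge0_ler_powR (ltW del0) _ _ rr1; rewrite !nnegrE => h.
  have := h (powR_ge0 _ _) (le_trans (powR_ge0 _ _) rr1).
  by rewrite /rho1 -powRrM mulVf ?gt_eqF // powRr1.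
have H4 : Lam <= eps * powR Rr del - eps.
  have := ler_wpM2l (ltW eps0) H3; rewrite mulrDr mulr1 mulrCA mulfV ?gt_eqF // mulr1.
  lra.
rewrite -(ler_pM2r Pdpos).
have := mulr_ge0 (ltW (Hm x)) (sqr_ge0 D).
lra.
Qed.

End Graph.

Lemma newton (R : comNzRingType) (F : nat -> nat -> R) :
  (forall i n, F i.+1 n = F i n - F i n.+1) ->
  forall n i N, (n < N)%N ->
  F i n = \sum_(j < N) ('C(n, j))%:R * (-1) ^+ j * F (i + j)%N 0%N.
Proof.
move=> HF; elim=> [|n IH] i [|N] // nN.
  rewrite big_ord_recl /= bin0 expr0 addn0 mulr1 mul1r big1 ?addr0 // => j _.
  by rewrite /bump leq0n add1n bin0n /= !mul0r.
have e : F i n.+1 = F i n - F i.+1 n by rewrite HF; ring.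
rewrite e (IH i N.+1 (ltnW nN)) (IH i.+1 N nN).
rewrite big_ord_recl [in RHS]big_ord_recl !bin0 -addrA; congr (_ + _).
rewrite -sumrB; apply: eq_bigr => j _.
rewrite lift0 binS natrD exprS addnS -addSn; ring.
Qed.

Lemma Dtq_zero (R : realType) (V : eqType) (g : V -> int -> R) :
  (forall y (t : int), t <= 0 -> g y t = 0) ->
  forall l y (t : int), t <= 0 -> Dtq l g y t = 0.
Proof.
move=> Hg; elim=> [|l IH] y t t0 //=; first exact: Hg.
have t1 : t - 1 <= 0 by apply: le_trans t0; rewrite gerDl lerN10.
by rewrite /Dt -/(Dtq l g) IH // IH // subr0.
Qed.

Unset Implicit Arguments.

Theorem corollary4p3 (R : realType) (V : eqType) (nb : V -> seq V)
    (w : V -> V -> R) (m : V -> R) (rho : V -> V -> R)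
    (x0 : V) (alpha C k : R) (u : V -> int -> R) (q : nat) :
  weighted_graph nb w m ->
  intrinsic nb w m rho ->
  finite_balls rho ->
  finite_jump nb rho ->
  poly_volume_growth m rho x0 alpha C ->
  0 < k ->
  Ptilde nb w m rho k u ->
  2 * k + alpha + 2 < 4 * q%:R ->
  (forall x (t : int), t <= 0 -> Dtq q u x t = 0) /\
  (exists p : nat -> V -> R, forall x (t : int), t <= 0 ->
      u x t = \sum_(i < q) p i x * ('C(`|t|%N, i))%:R).
Proof.
move=> [Hu Hnl Hsym Hw [Hm Hconn]] [[Hr0 Hrge Hrs Hrt] Hint] Hfb [s Hs] Hvol k0
  [Hanc [p [Cu HCu]]] Hq.
pose ball (r : R) := undup (proj1_sig (constructive_indefinite_description _ (Hfb p r))).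
have Hbu : forall r, uniq (ball r) by move=> r; exact: undup_uniq.
have Hbm : forall r y, (y \in ball r) = (rho y p <= r).
  move=> r y; rewrite /ball mem_undup.
  case: (constructive_indefinite_description _ _) => l /= hl.
  by apply/idP/idP => /hl.
have Z : forall x (t : int), t <= 0 -> Dtq q u x t = 0.
  move=> x t ht.
  exact: (main_zero Hu Hsym Hw Hm Hrs Hrt Hrge Hint Hs Hbu Hbm Hvol k0 Hanc HCu Hq x ht).
split; first exact: Z.
exists (fun i x => (-1) ^+ i * Dtq i u x 0).
move=> x t t0.
set n := `|t|%N.
have tn : t = - (n%:Z) by rewrite /n lez0_abs // opprK.
pose F i j := Dtq i u x (- (j%:Z)).
have HF : forall i j, F i.+1 j = F i j - F i j.+1.
  by move=> i j; rewrite /F /Dtq /= /Dt intS1.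
have nN : (n < q + n.+1)%N by rewrite addnS ltnS leq_addl.
have := @newton _ F HF n 0%N (q + n.+1)%N nN.
have -> : F 0%N n = u x t by rewrite /F tn.
move=> ->.
rewrite big_split_ord /= [X in _ + X]big1 ?addr0.
  by apply: eq_bigr => i _; rewrite /F add0n oppr0 /=; ring.
move=> j _; rewrite /F add0n oppr0 /=.
have -> : Dtq (q + j) u x 0 = 0.
  rewrite /Dtq addnC iterD -/(Dtq j (Dtq q u)).
  by apply: Dtq_zero => // y t' t'0; apply: Z.
by rewrite mulr0.
Qed.
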